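(* Let $N\ge2$, $1\le r\le N-1$, $m\ge2$, $\alpha=\begin{pmatrix}\alpha_{11}&\alpha_{12}\\\alpha_{21}&\alpha_{22}\end{pmatrix}\in\mathbb{C}^{N\times N}$. Let $$\beta_{m-1}=\sum_{i\ge0}\begin{pmatrix}A_{m-1,i}&B_{m-1,i}\\C_{m-1,i}&D_{m-1,i}\end{pmatrix}\epsilon^i,\qquad \beta_m=\begin{pmatrix}0&0\\C_{m,0}&D_{m,0}\end{pmatrix}+\sum_{i\ge1}\begin{pmatrix}A_{m,i}&B_{m,i}\\C_{m,i}&D_{m,i}\end{pmatrix}\epsilon^i$$ with $\det\beta_m=O(\epsilon^r)$ and $\det D_{m,0}\neq0$, and let $\beta_{m+1}=m\beta_m^{-1}-\beta_{m-1}-\beta_m-\alpha$. Put $S:=A_{m,1}-B_{m,1}D_{m,0}^{-1}C_{m,0}\in\mathbb{C}^{r\times r}$ (which is invertible). Then, as $\epsilon\to0$, $$\det\beta_{m+1}=\epsilon^{-r}\det\begin{pmatrix}mS^{-1}&-mS^{-1}B_{m,1}D_{m,0}^{-1}-B_{m-1,0}-\alpha_{12}\\-mD_{m,0}^{-1}C_{m,0}S^{-1}&mD_{m,0}^{-1}+mD_{m,0}^{-1}C_{m,0}S^{-1}B_{m,1}D_{m,0}^{-1}-D_{m-1,0}-D_{m,0}-\alpha_{22}\end{pmatrix}+O(\epsilon^{-r+1}).$$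
   Context: Blocks: upper-left $r\times r$, upper-right $r\times(N-r)$, lower-left $(N-r)\times r$, lower-right $(N-r)\times(N-r)$. Expansions are asymptotic expansions in $\epsilon\to0$, inverses computed in the ring of Laurent expansions; $\det\beta_m=O(\epsilon^r)$ means $\det\beta_m=c\epsilon^r+O(\epsilon^{r+1})$ with $c\ne0$. *)

(* Defs.v *)
From HB Require Import structures.
From mathcomp Require Import all_boot all_order all_algebra.
From mathcomp Require Import complex.
From mathcomp Require Import reals.
Set Implicit Arguments. Unset Strict Implicit. Unset Printing Implicit Defensive.
Import Order.TTheory GRing.Theory Num.Theory.
Local Open Scope ring_scope.

Definition bigO0 (C : numFieldType) (f : C -> C) (k : int) : Prop :=
  exists (K d : C), 0 < d /\
    forall e : C, 0 < `|e| < d -> `|f e| <= K * `|e| ^ k.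

Definition has_expansion (C : numFieldType) (p q : nat)
    (F : C -> 'M[C]_(p, q)) (c : nat -> 'M[C]_(p, q)) : Prop :=
  forall (K : nat) (i : 'I_p) (j : 'I_q),
    bigO0 (fun e => F e i j - \sum_(n < K) c n i j * e ^+ n) K%:Z.

(* Main.v *)
Require Import Defs.
From HB Require Import structures.
From mathcomp Require Import all_boot all_order all_algebra.
From mathcomp Require Import complex.
From mathcomp Require Import reals.
From mathcomp Require Import ring lra.
Import Order.TTheory GRing.Theory Num.Theory.
Local Open Scope ring_scope.
Local Open Scope complex_scope.
Set Implicit Arguments. Unset Strict Implicit. Unset Printing Implicit Defensive.
Section S.
Variable R : realType.
Definition nrm (z : R[i]) : R := Normc.normc z.
Lemma nrmE (z : R[i]) : `|z| = (nrm z)%:C. Proof. by []. Qed.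
Lemma nrm_ge0 z : 0 <= nrm z.
Proof. have := normr_ge0 z; rewrite nrmE -[0 : R[i]]/(0%:C) lecR //. Qed.
Lemma nrmD x y : nrm (x + y) <= nrm x + nrm y.
Proof. by rewrite -lecR rmorphD /= -!nrmE ler_normD. Qed.
Lemma nrmM x y : nrm (x * y) = nrm x * nrm y.
Proof. exact: Normc.normcM. Qed.
Lemma nrmN x : nrm (- x) = nrm x.
Proof. by apply: complexI; rewrite -!nrmE normrN. Qed.
Lemma nrm0 : nrm 0 = 0.
Proof. exact: Normc.normc0. Qed.
Lemma nrm_eq0 x : (nrm x == 0) = (x == 0).
Proof. by rewrite -(inj_eq (@complexI R)) -nrmE normr_eq0. Qed.
Lemma nrmV x : nrm x^-1 = (nrm x)^-1.
Proof. exact: Normc.normcV. Qed.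
Lemma nrmX x n : nrm (x ^+ n) = nrm x ^+ n.
Proof. elim: n => [|n IH]; first by rewrite !expr0 /nrm Normc.normc1.
by rewrite !exprS nrmM IH. Qed.
Lemma nrmB x y : nrm (x - y) = nrm (y - x).
Proof. by rewrite -nrmN opprB. Qed.
Lemma nrmC (x : R) : nrm x%:C = `|x|.
Proof. by apply: complexI; rewrite -nrmE normc_def /= expr0n /= addr0 sqrtr_sqr. Qed.

Lemma rCz (x : R) (k : int) : (x%:C) ^ k = (x ^ k)%:C.
Proof. case: k => n /=; first by rewrite rmorphXn.
by rewrite /exprz fmorphV rmorphXn. Qed.

Definition bo (f : R[i] -> R[i]) (k : int) : Prop :=
  exists (K d : R), 0 < d /\ forall e, 0 < nrm e < d -> nrm (f e) <= K * nrm e ^ k.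

Lemma bigO0_bo f k : bigO0 f k -> bo f k.
Proof.
case=> [[a b]] [[d1 d2] [d0 H]]; exists a, d1.
move: d0; rewrite ltcE /= => /andP[/eqP d20 d10]; subst d2; split => //.
move=> e /andP[e0 ed]; have := H e.
rewrite nrmE rCz -[Complex d1 0]/(d1%:C) ltcR e0 ltcR ed => /(_ isT).
rewrite nrmE lecE => /andP[_] /=; lra.
Qed.

Lemma bo_bigO0 f k : bo f k -> bigO0 f k.
Proof.
case=> K [d [d0 H]]; exists K%:C, d%:C; split; first by rewrite ltcR.
move=> e; rewrite !nrmE rCz -[0 : R[i]]/(0%:C) !ltcR -rmorphM lecR => /andP[e0 ed].
by apply: H; rewrite e0 ed.
Qed.

Lemma bo_pos f k : bo f k -> exists K d, 0 < K /\ 0 < d /\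
  forall e, 0 < nrm e < d -> nrm (f e) <= K * nrm e ^ k.
Proof.
case=> K [d [d0 H]]; exists (`|K| + 1), d; split; first by rewrite ltr_wpDl.
split=> // e he; apply: (le_trans (H e he)); apply: ler_wpM2r.
  by apply: exprz_ge0; apply: nrm_ge0.
by rewrite (le_trans (ler_norm K)) // lerDl.
Qed.

Definition lim1 (f : R[i] -> R[i]) (a : R[i]) := bo (fun e => f e - a) 1.

Lemma lim1P f a : lim1 f a -> exists K d, 0 < K /\ 0 < d /\ d <= 1 /\
  forall e, 0 < nrm e < d -> nrm (f e - a) <= K * nrm e.
Proof.
move/bo_pos=> [K [d [K0 [d0 H]]]]; exists K, (Num.min d 1); split => //.
split; first by rewrite lt_min d0 ltr01.
split; first by rewrite ge_min lexx orbT.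
move=> e /andP[e0]; rewrite lt_min => /andP[ed _].
by rewrite -[nrm e]expr1z; apply: H; rewrite e0 ed.
Qed.

Lemma lim1I f a K d : 0 < d -> (forall e, 0 < nrm e < d -> nrm (f e - a) <= K * nrm e) ->
  lim1 f a.
Proof. by move=> d0 H; exists K, d; split => // e he; rewrite expr1z; apply: H. Qed.

Lemma lim1_ext f g a : (forall e, f e = g e) -> lim1 f a -> lim1 g a.
Proof. move=> fg [K [d [d0 H]]]; exists K, d; split => // e he; rewrite -fg; exact: H. Qed.

Lemma lim1_cst a : lim1 (fun _ => a) a.
Proof. apply: (@lim1I _ _ 0 1) => // e _; rewrite subrr nrm0 mul0r lexx //. Qed.

Lemma lim1_add f g a b : lim1 f a -> lim1 g b -> lim1 (fun e => f e + g e) (a + b).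
Proof.
move=> /lim1P [K1 [d1 [K10 [d10 [_ H1]]]]] /lim1P [K2 [d2 [K20 [d20 [_ H2]]]]].
apply: (@lim1I _ _ (K1 + K2) (Num.min d1 d2)); first by rewrite lt_min d10 d20.
move=> e /andP[e0]; rewrite lt_min => /andP[e1 e2].
have h1 := H1 e ltac:(by rewrite e0 e1). have h2 := H2 e ltac:(by rewrite e0 e2).
have := nrmD (f e - a) (g e - b).
have -> : f e - a + (g e - b) = f e + g e - (a + b) by ring.
lra.
Qed.

Lemma lim1_opp f a : lim1 f a -> lim1 (fun e => - f e) (- a).
Proof.
move=> [K [d [d0 H]]]; exists K, d; split => // e he.
by rewrite -opprD nrmN; exact: H.
Qed.

Lemma lim1_mul f g a b : lim1 f a -> lim1 g b -> lim1 (fun e => f e * g e) (a * b).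
Proof.
move=> /lim1P [K1 [d1 [K10 [d10 [d11 H1]]]]] /lim1P [K2 [d2 [K20 [d20 [d21 H2]]]]].
apply: (@lim1I _ _ (K1 * K2 + nrm a * K2 + nrm b * K1) (Num.min d1 d2)).
  by rewrite lt_min d10 d20.
move=> e /andP[e0]; rewrite lt_min => /andP[e1 e2].
have h1 := H1 e ltac:(by rewrite e0 e1). have h2 := H2 e ltac:(by rewrite e0 e2).
have -> : f e * g e - a * b = (f e - a) * (g e - b) + a * (g e - b) + (f e - a) * b by ring.
set u := f e - a; set v := g e - b; set x := nrm e.
have t1 := nrmD (u * v + a * v) (u * b).
have t2 := nrmD (u * v) (a * v).
rewrite !nrmM in t1 t2.
have u0 := nrm_ge0 u; have v0 := nrm_ge0 v; have a0 := nrm_ge0 a; have b0 := nrm_ge0 b.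
have uv : nrm u * nrm v <= (K1 * x) * (K2 * x) by apply: ler_pM.
have xx : x * x <= x by rewrite ler_piMr // ltW // (lt_le_trans e1 d11).
have p1 : nrm a * nrm v <= nrm a * (K2 * x) by apply: ler_wpM2l.
have p2 : nrm u * nrm b <= (K1 * x) * nrm b by apply: ler_wpM2r.
have p3 : K1 * K2 * (x * x) <= K1 * K2 * x by apply: ler_wpM2l => //; apply: mulr_ge0; apply: ltW.
nra.
Qed.


Lemma lim1_sum (I : Type) (r : seq I) (P : pred I) (F : I -> R[i] -> R[i]) (a : I -> R[i]) :
  (forall i, lim1 (F i) (a i)) ->
  lim1 (fun e => \sum_(i <- r | P i) F i e) (\sum_(i <- r | P i) a i).
Proof.
move=> H; elim: r => [|x r IH].
  by rewrite big_nil; apply: (lim1_ext _ (lim1_cst 0)) => e; rewrite !big_nil.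
rewrite big_cons; case Px: (P x).
  by apply: (lim1_ext _ (lim1_add (H x) IH)) => e; rewrite big_cons Px.
by apply: (lim1_ext _ IH) => e; rewrite big_cons Px.
Qed.

Lemma lim1_prod (I : Type) (r : seq I) (P : pred I) (F : I -> R[i] -> R[i]) (a : I -> R[i]) :
  (forall i, lim1 (F i) (a i)) ->
  lim1 (fun e => \prod_(i <- r | P i) F i e) (\prod_(i <- r | P i) a i).
Proof.
move=> H; elim: r => [|x r IH].
  by rewrite big_nil; apply: (lim1_ext _ (lim1_cst 1)) => e; rewrite !big_nil.
rewrite big_cons; case Px: (P x).
  by apply: (lim1_ext _ (lim1_mul (H x) IH)) => e; rewrite big_cons Px.
by apply: (lim1_ext _ IH) => e; rewrite big_cons Px.
Qed.

Lemma lim1_det n (F : R[i] -> 'M[R[i]]_n) (A : 'M[R[i]]_n) :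
  (forall i j, lim1 (fun e => F e i j) (A i j)) -> lim1 (fun e => \det (F e)) (\det A).
Proof.
move=> H; apply: lim1_sum => s; apply: lim1_mul; first exact: lim1_cst.
by apply: lim1_prod => i; apply: H.
Qed.

Lemma lim1_mulmx p q n (F : R[i] -> 'M[R[i]]_(p, q)) (G : R[i] -> 'M[R[i]]_(q, n)) (A : 'M[R[i]]_(p,q)) (B : 'M[R[i]]_(q,n)) :
  (forall i j, lim1 (fun e => F e i j) (A i j)) ->
  (forall i j, lim1 (fun e => G e i j) (B i j)) ->
  forall i j, lim1 (fun e => (F e *m G e) i j) ((A *m B) i j).
Proof.
move=> HF HG i j; rewrite mxE; apply: (lim1_ext _ (lim1_sum _ _ _)).
  by move=> e; rewrite mxE.
by move=> k; apply: lim1_mul.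
Qed.


Lemma bo_ext f g k : (forall e, f e = g e) -> bo f k -> bo g k.
Proof. move=> fg [K [d [d0 H]]]; exists K, d; split => // e he; rewrite -fg; exact: H. Qed.

Lemma lim1_sub f g a b : lim1 f a -> lim1 g b -> lim1 (fun e => f e - g e) (a - b).
Proof. by move=> hf hg; apply: lim1_add => //; apply: lim1_opp. Qed.

Lemma exp_lim1 p q (F : R[i] -> 'M[R[i]]_(p, q)) c :
  has_expansion F c -> forall i j, lim1 (fun e => F e i j) (c 0%N i j).
Proof.
move=> H i j; have := bigO0_bo (H 1%N i j); apply: bo_ext => e.
by rewrite big_ord1 expr0 mulr1.
Qed.

Lemma exp_bo2 p q (F : R[i] -> 'M[R[i]]_(p, q)) c :
  has_expansion F c -> forall i j,
  bo (fun e => F e i j - (c 0%N i j + c 1%N i j * e)) 2.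
Proof.
move=> H i j; have := bigO0_bo (H 2%N i j); apply: bo_ext => e.
by rewrite !big_ord_recr big_ord0 /= add0r expr0 mulr1 expr1.
Qed.

Lemma small_eq0 (a : R[i]) K d : 0 < d ->
  (forall e, 0 < nrm e < d -> nrm a <= K * nrm e) -> a = 0.
Proof.
move=> d0 H; apply/eqP; rewrite -nrm_eq0; apply/negPn/negP => na.
have a0 : 0 < nrm a by rewrite lt_neqAle eq_sym na nrm_ge0.
set t := Num.min (d / 2) (nrm a / (2 * (`|K| + 1))).
have K1 : 0 < 2 * (`|K| + 1) by rewrite mulr_gt0 // ltr_wpDl.
have t0 : 0 < t by rewrite lt_min divr_gt0 //= divr_gt0.
have h2 : d / 2 < d by lra.
have td : t < d by rewrite gt_min h2.
have ta : t * (2 * (`|K| + 1)) <= nrm a by rewrite -ler_pdivlMr // ge_min lexx orbT.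
have := H t%:C; rewrite nrmC gtr0_norm // t0 td => /(_ isT) h.
have kk : K * t <= `|K| * t by apply: ler_wpM2r; [exact: ltW | exact: ler_norm].
have tk := normr_ge0 K.
nra.
Qed.
End S.

Section Alg.
Variable F : fieldType.
Variables r s : nat.
Lemma schur_det (A : 'M[F]_r) (B : 'M[F]_(r, s)) (C : 'M[F]_(s, r)) (D : 'M[F]_s) :
  D \in unitmx -> \det (block_mx A B C D) = \det (A - B *m invmx D *m C) * \det D.
Proof.
move=> uD.
have E : block_mx 1%:M (- (B *m invmx D)) 0 1%:M *m block_mx A B C D
   = block_mx (A - B *m invmx D *m C) 0 C D.
  rewrite mulmx_block !mul1mx !mul0mx !add0r !mulNmx mulmxKV //.
  by rewrite subrr.
have := congr1 determinant E.
by rewrite det_mulmx det_ublock det_lblock !det1 !mul1r.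
Qed.

Lemma inv_block (S : 'M[F]_r) (B : 'M[F]_(r, s)) (C : 'M[F]_(s, r)) (D : 'M[F]_s) :
  S \in unitmx -> D \in unitmx ->
  block_mx (invmx S) (- (invmx S *m B *m invmx D)) (- (invmx D *m C *m invmx S))
    (invmx D + invmx D *m C *m invmx S *m B *m invmx D)
    *m block_mx (S + B *m invmx D *m C) B C D = 1%:M.
Proof.
move=> uS uD; set Si := invmx S; set Di := invmx D.
rewrite mulmx_block (scalar_mx_block r s 1); congr block_mx.
- by rewrite mulmxDr !mulmxA mulVmx // mulNmx addrK.
- by rewrite mulNmx mulmxKV // subrr.
- rewrite !mulNmx mulmxDr mulmxDl !mulmxA mulmxKV //.
  set a := Di *m C; set b := Di *m C *m Si *m B *m Di *m C.
  by rewrite opprD addrACA addNr addNr addr0.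
- rewrite !mulNmx mulmxDl ?mulmxA !mulmxKV // mulVmx //.
  set a := Di *m C *m Si *m B.
  by rewrite addrCA addNr addr0.
Qed.
End Alg.

Unset Implicit Arguments.
Theorem lemma2 (R : realType) (r s m : nat) (hr : (0 < r)%N) (hs : (0 < s)%N)
  (hm : (2 <= m)%N)
  (alpha : 'M[R[i]]_(r + s))
  (beta_m1 beta_m : R[i] -> 'M[R[i]]_(r + s))
  (c_m1 c_m : nat -> 'M[R[i]]_(r + s))
  (exp_m1 : has_expansion beta_m1 c_m1)
  (exp_m : has_expansion beta_m c_m)
  (A0 : ulsubmx (c_m 0%N) = 0) (B0 : ursubmx (c_m 0%N) = 0)
  (hdet : exists c : R[i], c != 0 /\
            bigO0 (fun e => \det (beta_m e) - c * e ^+ r) (r.+1)%:Z)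
  (hD : \det (drsubmx (c_m 0%N)) != 0) :
  let beta_p1 := fun e : R[i] =>
    m%:R *: invmx (beta_m e) - beta_m1 e - beta_m e - alpha in
  let Dm0i := invmx (drsubmx (c_m 0%N)) in
  let Cm0 := dlsubmx (c_m 0%N) in
  let Bm1 := ursubmx (c_m 1%N) in
  let S := ulsubmx (c_m 1%N) - Bm1 *m Dm0i *m Cm0 in
  let Si := invmx S in
  let M := block_mx
     (m%:R *: Si)
     (- (m%:R *: (Si *m Bm1 *m Dm0i)) - ursubmx (c_m1 0%N) - ursubmx alpha)
     (- (m%:R *: (Dm0i *m Cm0 *m Si)))
     (m%:R *: Dm0i + m%:R *: (Dm0i *m Cm0 *m Si *m Bm1 *m Dm0i)
        - drsubmx (c_m1 0%N) - drsubmx (c_m 0%N) - drsubmx alpha) in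
  S \in unitmx /\
  bigO0 (fun e => \det (beta_p1 e) - e ^ (- (r%:Z)) * \det M) (1 - r%:Z).
Proof.
move=> beta_p1 Dm0i Cm0 Bm1 S Si M.
have U0 : forall (k : 'I_r) (j : 'I_(r + s)), c_m 0%N (lshift s k) j = 0.
  have U : usubmx (c_m 0%N) = 0.
    by rewrite -[usubmx (c_m 0%N)]hsubmxK -/(ulsubmx _) -/(ursubmx _) A0 B0 row_mx0.
  by move=> k j; have := congr1 (fun A : 'M[R[i]]_(r, r + s) => A k j) U; rewrite !mxE.
have uD : drsubmx (c_m 0%N) \in unitmx by rewrite unitmxE unitfE.
set T := block_mx (ulsubmx (c_m 1%N)) Bm1 Cm0 (drsubmx (c_m 0%N)).
have TE : T = col_mx (usubmx (c_m 1%N)) (dsubmx (c_m 0%N)).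
  by rewrite /T /block_mx !hsubmxK.
set Gm := fun e : R[i] => col_mx (e^-1 *: usubmx (beta_m e)) (dsubmx (beta_m e)).
have detG : forall e, e != 0 -> \det (beta_m e) = e ^+ r * \det (Gm e).
  move=> e e0.
  have -> : beta_m e = block_mx (e%:M) 0 0 1%:M *m Gm e.
    rewrite mul_block_col !mul0mx mul1mx addr0 add0r mul_scalar_mx scalerA mulfV //.
    by rewrite scale1r vsubmxK.
  by rewrite det_mulmx det_lblock det_scalar det1 mulr1.
have limG : forall i j, lim1 (fun e => Gm e i j) (T i j).
  move=> i j; rewrite TE -(splitK i); case: (split i) => k /=.
    rewrite col_mxEu mxE.
    have [K [d [K0 [d0 H]]]] := bo_pos (exp_bo2 exp_m (lshift s k) j).
    apply: (@lim1I _ _ _ K d) => // e /andP[ex ed].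
    have e0 : e != 0 by rewrite -nrm_eq0 gt_eqF.
    have h := H e ltac:(by rewrite ex ed).
    rewrite /Gm col_mxEu !mxE U0 add0r in h *.
    have EE : e^-1 * beta_m e (lshift s k) j - c_m 1%N (lshift s k) j
       = e^-1 * (beta_m e (lshift s k) j - c_m 1%N (lshift s k) j * e).
      by rewrite mulrBr [c_m 1%N _ _ * e]mulrC mulrA mulVf // mul1r.
    rewrite EE.
    rewrite nrmM nrmV ler_pdivrMl //.
    have x2 : nrm e ^ (2:int) = nrm e * nrm e by rewrite -[(2:int)]/(Posz 2) -exprnP expr2.
    by rewrite x2 in h; rewrite mulrCA.
  rewrite col_mxEd mxE.
  apply: lim1_ext (exp_lim1 exp_m (rshift r k) j) => e.
  by rewrite /Gm col_mxEd mxE.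
case: hdet => c [cn0 hc].
have [K1 [d1 [K10 [d10 H1]]]] := bo_pos (bigO0_bo hc).
have xr1 : forall x : R, x ^ (r.+1 : int) = x ^+ r * x.
  by move=> x; rewrite -exprnP exprSr.
have c_eq : c = \det T.
  have [K2 [d2 [K20 [d20 [_ H2]]]]] := lim1P (lim1_det limG).
  apply/eqP; rewrite -subr_eq0; apply/eqP.
  apply: (@small_eq0 _ _ (K1 + K2) (Num.min d1 d2)); first by rewrite lt_min d10 d20.
  move=> e /andP[ex]; rewrite lt_min => /andP[e1 e2].
  have e0 : e != 0 by rewrite -nrm_eq0 gt_eqF.
  have h1 := H1 e ltac:(by rewrite ex e1).
  have h2 := H2 e ltac:(by rewrite ex e2).
  rewrite detG // xr1 in h1.
  have yr : 0 < nrm e ^+ r by rewrite exprn_gt0.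
  have h1' : nrm (\det (Gm e) - c) <= K1 * nrm e.
    rewrite -(ler_pM2l yr) mulrCA.
    by rewrite -nrmX -nrmM mulrBr nrmX [e ^+ r * c]mulrC.
  have := nrmD (\det (Gm e) - \det T) (- (\det (Gm e) - c)).
  rewrite nrmN.
  have -> : \det (Gm e) - \det T + - (\det (Gm e) - c) = c - \det T by ring.
  lra.
have detTE : \det T = \det S * \det (drsubmx (c_m 0%N)) by rewrite schur_det.
have uS : S \in unitmx.
  have : \det S * \det (drsubmx (c_m 0%N)) != 0 by rewrite -detTE -c_eq.
  by rewrite mulf_eq0 negb_or unitmxE unitfE => /andP[].
split => //.
set Q0 := c_m1 0%N + c_m 0%N + alpha.
set F0 := m%:R *: (1%:M : 'M[R[i]]_(r + s)) - Q0 *m c_m 0%N.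
have XT := inv_block Bm1 Cm0 uS uD.
have eA : S + Bm1 *m invmx (drsubmx (c_m 0%N)) *m Cm0 = ulsubmx (c_m 1%N).
  by rewrite /S subrK.
rewrite eA in XT.
have P2T : block_mx 0 0 0 1%:M *m T = c_m 0%N.
  rewrite /T mulmx_block !mul0mx !mul1mx !add0r.
  by rewrite -[0 : 'M_(r, r)]A0 -[0 : 'M_(r, s)]B0 submxK.
have ursD : forall A B : 'M[R[i]]_(r + s), ursubmx (A + B) = ursubmx A + ursubmx B.
  by move=> A B; apply/matrixP => i j; rewrite !mxE.
have drsD : forall A B : 'M[R[i]]_(r + s), drsubmx (A + B) = drsubmx A + drsubmx B.
  by move=> A B; apply/matrixP => i j; rewrite !mxE.
have ME : M = m%:R *: block_mx Si (- (Si *m Bm1 *m Dm0i)) (- (Dm0i *m Cm0 *m Si))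
    (Dm0i + Dm0i *m Cm0 *m Si *m Bm1 *m Dm0i) - Q0 *m block_mx 0 0 0 1%:M.
  rewrite -[Q0]submxK mulmx_block !mulmx0 !mulmx1 !addr0 !add0r.
  rewrite scale_block_mx opp_block_mx add_block_mx /M.
  by rewrite !subr0 /Q0 !ursD !drsD B0 addr0 !scalerN scalerDr !opprD !addrA.
have MT : M *m T = F0.
  rewrite ME mulmxBl -scalemxAl XT -mulmxA P2T.
  by [].
have detF0 : \det F0 = \det M * c by rewrite -MT det_mulmx c_eq.
set Fe := fun e : R[i] => m%:R *: (1%:M : 'M[R[i]]_(r + s))
   - (beta_m1 e + beta_m e + alpha) *m beta_m e.
have subE : forall (A B : 'M[R[i]]_(r + s)) i j, (A - B) i j = A i j - B i j.
  by move=> A B i j; rewrite !mxE.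
have HQ : forall i j, lim1 (fun e => (beta_m1 e + beta_m e + alpha) i j) (Q0 i j).
  move=> i j; rewrite /Q0 !mxE.
  apply: lim1_ext (lim1_add (lim1_add (exp_lim1 exp_m1 i j) (exp_lim1 exp_m i j))
      (lim1_cst (alpha i j))) => e.
  by rewrite !mxE.
have limF : forall i j, lim1 (fun e => Fe e i j) (F0 i j).
  move=> i j; rewrite /F0 subE.
  apply: lim1_ext (lim1_sub (lim1_cst _) (lim1_mulmx HQ (exp_lim1 exp_m) i j)) => e.
  by rewrite /Fe subE.
have [K3 [d3 [K30 [d30 [_ H3]]]]] := lim1P (lim1_det limF).
rewrite detF0 in H3.
have nc0 : 0 < nrm c by rewrite lt_neqAle eq_sym nrm_eq0 cn0 nrm_ge0.
set dM := nrm (\det M).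
have dM0 : 0 <= dM := nrm_ge0 _.
set L := K3 + dM * K1.
clear limF HQ subE MT ME XT eA ursD drsD P2T detTE c_eq limG detG TE U0 A0 B0 hD exp_m1 exp_m hc.
apply: bo_bigO0.
exists (2 * L / nrm c), (Num.min d1 (Num.min d3 (nrm c / (2 * K1)))).
split; first by rewrite !lt_min d10 d30 divr_gt0 // mulr_gt0.
move=> e /andP[ex]; rewrite !lt_min => /and3P[e1 e3 ec].
have e0 : e != 0 by rewrite -nrm_eq0 gt_eqF.
have h1 := H1 e ltac:(by rewrite ex e1).
rewrite xr1 in h1.
have h3 := H3 e ltac:(by rewrite ex e3).
set x := nrm e in ex e1 e3 ec h1 h3 *.
set y := x ^+ r in h1 *.
have y0 : 0 < y by rewrite exprn_gt0.
have K1x : K1 * x <= nrm c / 2.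
  move: ec; rewrite ltr_pdivlMr ?mulr_gt0 // => ec; lra.
have hb : nrm c * y / 2 <= nrm (\det (beta_m e)).
  have := nrmD (\det (beta_m e)) (- (\det (beta_m e) - c * e ^+ r)).
  rewrite nrmN (_ : _ + _ = c * e ^+ r); last by ring.
  rewrite nrmM nrmX -/x -/y.
  have t : K1 * (y * x) <= nrm c / 2 * y.
    by rewrite mulrCA [_ * y]mulrC ler_wpM2l // ltW.
  lra.
have db0 : \det (beta_m e) != 0.
  have hb0 : 0 < nrm (\det (beta_m e)).
    by apply: lt_le_trans hb; rewrite divr_gt0 ?mulr_gt0.
  by rewrite -nrm_eq0 gt_eqF.
have ub : beta_m e \in unitmx by rewrite unitmxE unitfE.
have hP : \det (beta_p1 e) * \det (beta_m e) = \det (Fe e).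
  rewrite -det_mulmx /beta_p1 /Fe !mulmxBl -scalemxAl (mulVmx ub).
  rewrite !mulmxDl !opprD !addrA; reflexivity.
have x0 : x != 0 by rewrite gt_eqF.
rewrite expfzDr // expr1z -!exprnN.
set E := \det (beta_p1 e) - (e ^+ r)^-1 * \det M.
have key : E * \det (beta_m e) = (\det (Fe e) - \det M * c)
    - (e ^+ r)^-1 * \det M * (\det (beta_m e) - c * e ^+ r).
  rewrite -hP /E; field; exact: expf_neq0.
have hE : nrm E * nrm (\det (beta_m e)) <= L * x.
  rewrite -nrmM key.
  have := nrmD (\det (Fe e) - \det M * c)
    (- ((e ^+ r)^-1 * \det M * (\det (beta_m e) - c * e ^+ r))).
  rewrite nrmN !nrmM nrmV nrmX -/x -/y -/dM.
  have t2 : y^-1 * dM * nrm (\det (beta_m e) - c * e ^+ r) <= dM * K1 * x.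
    have p0 : 0 <= y^-1 * dM by rewrite mulr_ge0 // invr_ge0 ltW.
    apply: le_trans (ler_wpM2l p0 h1) _.
    have -> : y^-1 * dM * (K1 * (y * x)) = dM * K1 * x.
      by field; rewrite gt_eqF.
    by [].
  rewrite /L; lra.
have hE2 : nrm E * (nrm c * y / 2) <= L * x.
  have hh := ler_wpM2l (nrm_ge0 E) hb.
  exact: le_trans hh hE.
rewrite -ler_pdivlMr in hE2; last by rewrite divr_gt0 // mulr_gt0.
apply: le_trans hE2 _.
have -> : L * x / (nrm c * y / 2) = 2 * L / nrm c * (x * y^-1).
  by field; rewrite !gt_eqF.
by [].
Qed.
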